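(* Let $k\ge 2$ and let $G_1,\dots,G_k$ be connected graphs, each with at least $3$ vertices, and let $G^*=G_1\Box G_2\Box\cdots\Box G_k$. Then $$rx_3(G^* )\le \sum_{i=1}^k rx_3(G_i).$$ Moreover, if $rx_3(G_i)=sdiam_3(G_i)$ for every $i$, then equality holds.
   Context: All graphs are finite, simple, undirected. An edge coloring may give adjacent edges the same color. A tree is rainbow if no two of its edges have the same color. For a connected graph $G$ on at least $3$ vertices, a $3$-rainbow coloring is an edge coloring such that every set of $3$ vertices is contained in some rainbow tree; $rx_3(G)$ is the minimum number of colors of a $3$-rainbow coloring. The Steiner distance $d(S)$ of a vertex set $S$ is the minimum number of edges of a tree containing $S$, and $sdiam_3(G)=\max\{d(S): S\subseteq V(G),|S|=3\}$. The Cartesian product $G\Box H$ has vertex set $V(G)\times V(H)$, with $(g_1,h_1)\sim(g_2,h_2)$ iff ($g_1=g_2$ and $h_1h_2\in E(H)$) or ($h_1=h_2$ and $g_1g_2\in E(G)$). *)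

(* Defs.v *)
From HB Require Import structures.
From mathcomp Require Import all_boot.
Set Implicit Arguments.
Unset Strict Implicit.
Unset Printing Implicit Defensive.

Section GraphDefs.
Variables (T : finType) (e : rel T).

Definition simple_graph : Prop := symmetric e /\ irreflexive e.

Definition connected_graph : Prop := forall x y : T, connect e x y.

Definition is_edge (f : {set T}) : bool :=
  [exists x, exists y, e x y && (f == [set x; y])].

Definition eadj (E : {set {set T}}) : rel T :=
  fun x y => (x != y) && ([set x; y] \in E).

(* (V, E) is a tree (a subgraph of the graph): E consists of edges of the
   graph with both ends in V, V is nonempty, (V,E) is connected, and it is
   acyclic (every edge {x,y} of E is a bridge: x and y are disconnected in
   E minus that edge). *)
Definition is_tree (V : {set T}) (E : {set {set T}}) : bool :=
  [&& E \subset [set f | is_edge f],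
      [forall f in E, f \subset V],
      V != set0,
      [forall x in V, forall y in V, connect (eadj E) x y] &
      [forall f in E, forall x, forall y,
         ((f == [set x; y]) && (x != y)) ==> ~~ connect (eadj (E :\ f)) x y]].

(* Steiner distance d(S): minimum number of edges of a tree containing S.
   (For connected graphs a spanning tree exists, with #|T|-1 edges, so the
   default value #|T| is never attained.) *)
Definition steiner_dist (S : {set T}) : nat :=
  \big[minn/#|T|]_(VE : {set T} * {set {set T}} |
                     is_tree VE.1 VE.2 && (S \subset VE.1)) #|VE.2|.

Definition sdiam3 : nat :=
  \max_(S : {set T} | #|S| == 3) steiner_dist S.

(* Edge colorings with m colors: a color in 'I_m for each 2-set (only the
   values on edges matter). *)
Definition rainbow m (c : {ffun {set T} -> 'I_m}) (E : {set {set T}}) : bool :=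
  [forall f in E, forall g in E, (c f == c g) ==> (f == g)].

Definition is_3rainbow_coloring m (c : {ffun {set T} -> 'I_m}) : bool :=
  [forall S : {set T}, (#|S| == 3) ==>
     [exists VE : {set T} * {set {set T}},
        [&& is_tree VE.1 VE.2, S \subset VE.1 & rainbow c VE.2]]].

Definition has_3rainbow_coloring (m : nat) : bool :=
  [exists c : {ffun {set T} -> 'I_m}, is_3rainbow_coloring c].

(* Coloring all
   2-sets with distinct colors needs at most #|{set T}| colors, so for a
   connected graph the minimum below ranges over a nonempty set. *)
Definition rx3 : nat :=
  \big[minn/#|{set T}|]_(m < #|{set T}|.+1 | has_3rainbow_coloring m) m.

End GraphDefs.

Definition cart_prod (k : nat) (T : 'I_k -> finType) (e : forall i, rel (T i))
  : rel {dffun forall i : 'I_k, T i} :=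
  fun x y => [exists i : 'I_k, e i (x i) (y i) &&
                 [forall j : 'I_k, (j != i) ==> (x j == y j)]].

(* Main.v *)
Require Import Defs.
From HB Require Import structures.
From mathcomp Require Import all_boot zify.
From Stdlib Require Import Lia.
Set Implicit Arguments.
Unset Strict Implicit.
Unset Printing Implicit Defensive.


Lemma bigmin_le (I : eqType) (r : seq I) (P : pred I) (F : I -> nat) N i0 :
  i0 \in r -> P i0 -> \big[minn/N]_(i <- r | P i) F i <= F i0.
Proof.
elim: r => [//|a r IH]; rewrite inE big_cons => /orP[/eqP<- -> | /IH H Pi].
  exact: geq_minl.
case: (P a); last exact: H.
exact: leq_trans (geq_minr _ _) (H Pi).
Qed.

Lemma bigmin_le_idx (I : eqType) (r : seq I) (P : pred I) (F : I -> nat) N :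
  \big[minn/N]_(i <- r | P i) F i <= N.
Proof.
apply: (big_rec (fun v => v <= N)) => // i y _ Hy.
exact: leq_trans (geq_minr _ _) Hy.
Qed.

Lemma bigmin_ind (I : eqType) (r : seq I) (P : pred I) (F : I -> nat) N (K : nat -> Prop) :
  K N -> (forall i, P i -> K (F i)) -> K (\big[minn/N]_(i <- r | P i) F i).
Proof.
move=> KN KF; apply: (big_ind K) => // x y Hx Hy.
by rewrite /minn; case: ifP.
Qed.

Section Gen.
Variables (T : finType) (e : rel T).

Lemma eadj_sym (E : {set {set T}}) : symmetric (eadj E).
Proof. by move=> x y; rewrite /eadj eq_sym setUC. Qed.

Lemma eadjC (E : {set {set T}}) : connect_sym (eadj E).
Proof. exact: sym_connect_sym (eadj_sym E). Qed.

Lemma set2_inj (a b x y : T) : a != b -> [set a; b] = [set x; y] ->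
  (a = x /\ b = y) \/ (a = y /\ b = x).
Proof.
move=> ab H.
have ha : a \in [set x; y] by rewrite -H set21.
have hb : b \in [set x; y] by rewrite -H set22.
move: ha hb; rewrite !inE => /orP[]/eqP ea /orP[]/eqP eb; subst; auto;
  by rewrite eqxx in ab.
Qed.

Lemma connect_mono (E E' : {set {set T}}) x y : E \subset E' ->
  connect (eadj E) x y -> connect (eadj E') x y.
Proof.
move=> sE; apply: connect_sub => a b /andP[ab Hf]; apply: connect1.
by rewrite /eadj ab (subsetP sE).
Qed.

Lemma connect_hom (U : finType) (r : rel U) (h : U -> T) (E : {set {set T}}) x y :
  (forall a b, r a b -> connect (eadj E) (h a) (h b)) ->
  connect r x y -> connect (eadj E) (h x) (h y).
Proof.
move=> Hr /connectP[p]; elim: p x => [x _ -> //|z p IH x /= /andP[rxz pth] ey]; rewrite ey in IH *.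
apply: connect_trans (Hr _ _ rxz) _; exact: (IH z pth).
Qed.

Lemma spanning (V : {set T}) (E : {set {set T}}) :
  E \subset [set f | is_edge e f] -> (forall f, f \in E -> f \subset V) ->
  V != set0 -> {in V &, forall x y, connect (eadj E) x y} ->
  exists2 E' : {set {set T}}, E' \subset E & is_tree e V E'.
Proof.
move=> sE sV V0 cE.
pose P (E' : {set {set T}}) :=
  (E' \subset E) && [forall x in V, forall y in V, connect (eadj E') x y].
have PE : P E.
  rewrite /P subxx /=; apply/forall_inP => x xV; apply/forall_inP => y yV; exact: cE.
case: (arg_minnP (fun E' : {set {set T}} => #|E'|) PE) => E0 /andP[sE0 cE0] minE0.
exists E0 => //.
apply/and5P; split.
- exact: subset_trans sE0 sE.
- by apply/forall_inP => f fE0; apply: sV; apply: (subsetP sE0).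
- exact: V0.
- exact: cE0.
apply/forall_inP => f fE0; apply/forallP => x; apply/forallP => y.
apply/implyP => /andP[/eqP fxy xy]; apply/negP => C.
have : P (E0 :\ f).
  rewrite /P (subset_trans (subsetDl _ _) sE0) /=.
  apply/forall_inP => u uV; apply/forall_inP => v vV.
  have := forall_inP cE0 u uV => /forall_inP /(_ v vV).
  apply: connect_sub => a b /andP[ab abE].
  case: (eqVneq [set a; b] f) => [abf | abf].
    rewrite fxy in abf; case: (set2_inj ab abf) => [[-> ->]|[-> ->]] //.
    by rewrite eadjC.
  by apply: connect1; rewrite /eadj ab !inE abf abE.
move=> /minE0; rewrite (cardsD1 f E0) fE0 /=; lia.
Qed.

Lemma comp_tree (E : {set {set T}}) x0 :
  E \subset [set f | is_edge e f] ->
  exists2 E' : {set {set T}}, E' \subset E & is_tree e [set y | connect (eadj E) x0 y] E'.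
Proof.
move=> sE.
set V := [set y | connect (eadj E) x0 y].
set E1 := [set f in E | f \subset V].
have cE1 : forall y, y \in V -> connect (eadj E1) x0 y.
  move=> y; rewrite inE => /connectP[p pth ->].
  suff H : forall x, connect (eadj E) x0 x -> connect (eadj E1) x0 x ->
    path (eadj E) x p -> connect (eadj E1) x0 (last x p) by exact: H.
  elim: p {pth} => [//|z p IH] x cx c1x /= /andP[xz pth].
  have cz : connect (eadj E) x0 z by apply: connect_trans cx (connect1 xz).
  apply: IH pth => //; apply: connect_trans c1x (connect1 _).
  move: xz => /andP[xz xzE]; rewrite /eadj xz inE xzE /=.
  by rewrite subUset !sub1set !inE cx cz.
have [E' sE' tr] : exists2 E' : {set {set T}}, E' \subset E1 & is_tree e V E'.
  apply: spanning.
  - apply: subset_trans sE; by apply/subsetP => f; rewrite inE => /andP[].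
  - by move=> f; rewrite inE => /andP[].
  - by apply/set0Pn; exists x0; rewrite inE.
  - move=> u v uV vV; apply: (connect_trans _ (cE1 _ vV)).
    by rewrite eadjC; apply: cE1.
exists E' => //; apply: subset_trans sE' _; by apply/subsetP => f; rewrite inE => /andP[].
Qed.


Lemma rainbow_sub m (c : {ffun {set T} -> 'I_m}) (E E' : {set {set T}}) :
  E' \subset E -> rainbow c E -> rainbow c E'.
Proof.
move=> sE /forall_inP H; apply/forall_inP => f fE; apply/forall_inP => g gE.
by have /forall_inP := H f (subsetP sE _ fE); apply; apply: (subsetP sE).
Qed.

Lemma rainbow_card m (c : {ffun {set T} -> 'I_m}) (E : {set {set T}}) :
  rainbow c E -> #|E| <= m.
Proof.
move=> /forall_inP H.
rewrite -(@card_in_imset _ _ c E); last first.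
  move=> f g fE gE cfg; have /forall_inP := H f fE => /(_ g gE).
  by rewrite cfg eqxx => /eqP.
by rewrite -[m in _ <= m]card_ord max_card.
Qed.

Lemma steiner_le (S V : {set T}) (E : {set {set T}}) :
  is_tree e V E -> S \subset V -> steiner_dist e S <= #|E|.
Proof.
move=> tr sS; rewrite /steiner_dist.
apply: (@bigmin_le _ _ _ (fun VE : {set T} * {set {set T}} => #|VE.2|) _ (V, E))
  (mem_index_enum _) _ ; by rewrite /= tr sS.
Qed.

Lemma rx3_le m : has_3rainbow_coloring e m -> rx3 e <= m.
Proof.
move=> Hm; rewrite /rx3.
case: (leqP m #|{set T}|) => hm.
  have hm' : m < #|{set T}|.+1 by [].
  exact: (@bigmin_le _ _ _ (fun i : 'I_#|{set T}|.+1 => val i) _ (Ordinal hm'))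
    (mem_index_enum _) Hm.
apply: leq_trans (ltnW hm); exact: bigmin_le_idx.
Qed.

Lemma rx3_spec : has_3rainbow_coloring e #|{set T}| -> has_3rainbow_coloring e (rx3 e).
Proof.
move=> HN; rewrite /rx3; apply: (@bigmin_ind _ _ _ _ _ (has_3rainbow_coloring e)) => //.
Qed.

Lemma inj_col :
  (forall S : {set T}, #|S| == 3 -> exists VE : {set T} * {set {set T}},
      is_tree e VE.1 VE.2 && (S \subset VE.1)) ->
  has_3rainbow_coloring e #|{set T}|.
Proof.
move=> H; apply/existsP; exists [ffun f => enum_rank f].
apply/forallP => S; apply/implyP => /H[VE /andP[tr sS]].
apply/existsP; exists VE; rewrite tr sS /=.
apply/forall_inP => f _; apply/forall_inP => g _; rewrite !ffunE.
by apply/implyP => /eqP /enum_rank_inj ->.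
Qed.

Lemma superset (A : {set T}) n : #|A| <= n <= #|T| ->
  exists B : {set T}, A \subset B /\ #|B| = n.
Proof.
move=> /andP[h1 h2].
have [d nd] : exists d, n = #|A| + d by exists (n - #|A|); lia.
subst n.
move: h2; clear h1; elim: d A => [|d IH] A h.
  by exists A; rewrite addn0.
have /subsetPn[x _ xA] : ~~ ([set: T] \subset A).
  rewrite subTset; apply/negP => /eqP eA; move: h; rewrite eA cardsT; lia.
have [B [sB cB]] : exists B : {set T}, x |: A \subset B /\ #|B| = #|x |: A| + d.
  apply: IH; rewrite cardsU1 xA; lia.
exists B; split; first exact: subset_trans (subsetUr _ _) sB.
by rewrite cB cardsU1 xA; lia.
Qed.

Hypothesis sg : simple_graph e.
Hypothesis cg : connected_graph e.

Lemma tree_all (S : {set T}) (x0 : T) :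
  exists VE : {set T} * {set {set T}}, is_tree e VE.1 VE.2 && (S \subset VE.1).
Proof.
have [E' _ tr] := @comp_tree [set f | is_edge e f] x0 (subxx _).
exists ([set y | connect (eadj [set f | is_edge e f]) x0 y], E') => /=.
rewrite tr /=; apply/subsetP => y _; rewrite inE.
apply: (@connect_hom T e id) (cg x0 y) => a b ab /=; apply: connect1.
rewrite /eadj inE; apply/andP; split.
  by apply/negP => /eqP eab; rewrite eab (proj2 sg b) in ab.
by apply/existsP; exists a; apply/existsP; exists b; rewrite ab eqxx.
Qed.

Lemma has_N : has_3rainbow_coloring e #|{set T}|.
Proof.
apply: inj_col => S /eqP S3.
have /set0Pn[x0 _] : S != set0 by rewrite -card_gt0 S3.
exact: tree_all.
Qed.

End Gen.


Section Med.
Variable T : finType.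

Definition pedges (x : T) (p : seq T) := pairmap (fun u v => [set u; v]) x p.

Lemma path_F (E : {set {set T}}) x p : path (eadj E) x p ->
  path (eadj [set g in E | g \in pedges x p]) x p.
Proof.
elim: p x => [//|y p IH] x /= /andP[/andP[xy xyE] pth]; apply/andP; split.
  by rewrite /eadj xy inE xyE inE eqxx.
apply: sub_path (IH _ pth) => u v /andP[uv uvE]; rewrite /eadj uv.
by move: uvE; rewrite !inE => /andP[-> ->]; rewrite orbT.
Qed.

Lemma connect_F (E : {set {set T}}) x p : path (eadj E) x p ->
  connect (eadj [set g in E | g \in pedges x p]) x (last x p).
Proof. by move=> /path_F pth; apply/connectP; exists p. Qed.

Lemma pedges_sub x p g z : g \in pedges x p -> z \in g -> z \in x :: p.
Proof.
elim: p x => [//|y p IH] x /=; rewrite inE => /orP[/eqP -> | /IH H].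
  by rewrite !inE => /orP[->|->]; rewrite ?orbT.
by move=> /H yp; rewrite inE yp orbT.
Qed.

Lemma uniq_pedges x p : uniq (x :: p) -> uniq (pedges x p).
Proof.
elim: p x => [//|y p IH] x /= /andP[xyp /andP[yp up]].
rewrite (IH y) /= ?yp ?up // andbT; apply/negP => /pedges_sub /(_ (set21 x y)).
by move: xyp => /negPf ->.
Qed.

Definition disj (F G : {set {set T}}) := forall g, g \in F -> g \in G -> False.

Lemma median (E : {set {set T}}) (a1 a2 a3 : T) :
  connect (eadj E) a1 a2 -> connect (eadj E) a1 a3 ->
  exists c (F1 F2 F3 : {set {set T}}),
    [/\ [/\ F1 \subset E, F2 \subset E & F3 \subset E],
        [/\ disj F1 F2, disj F1 F3 & disj F2 F3] &
        [/\ connect (eadj F1) a1 c, connect (eadj F2) a2 c & connect (eadj F3) a3 c]].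
Proof.
move=> c12 c13; have /connectP[p0 pth0 l0] := c12.
move: l0; case: (shortenP pth0) => q pthq uq _ l0.
have R : forall z p, path (eadj E) z p -> last z p \in a1 :: q ->
  exists c (F3 : {set {set T}}), [/\ c \in a1 :: q, F3 \subset E,
    (forall g, g \in F3 -> exists2 v, v \in g & v \notin a1 :: q) &
    connect (eadj F3) z c].
  move=> z p; elim: p z => [|y p IH] z /=.
    by move=> _ zW; exists z, set0; split => //; [exact: sub0set | by move=> g; rewrite inE].
  move=> /andP[zy pth] /(IH _ pth) [c [F3 [cW sF3 hF3 cF3]]].
  case zW: (z \in a1 :: q).
    by exists z, set0; split => //; [exact: sub0set | by move=> g; rewrite inE].
  exists c, ([set z; y] |: F3); split => //.
  - by rewrite subUset sub1set sF3 andbT; case/andP: zy.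
  - move=> g; rewrite in_setU1 => /orP[/eqP -> | /hF3 //].
    by exists z; rewrite ?set21 ?zW.
  - apply: connect_trans (connect1 _) (connect_mono _ cF3); last exact: subsetUr.
    by case/andP: zy => zy _; rewrite /eadj zy !inE eqxx.
have c32 : connect (eadj E) a3 a2 by apply: connect_trans _ c12; rewrite eadjC.
have /connectP[r pthr lr] := c32.
have [c [F3 [cW sF3 hF3 cF3]]] := R a3 r pthr (etrans (congr1 _ (esym lr)) (etrans (congr1 _ l0) (mem_last _ _))).
move: pthq uq l0 hF3; case/splitPl: cW => q1 q2 lq1 pthq uq l0 hF3.
move: (pthq); rewrite cat_path lq1 => /andP[p1 p2].
exists c, [set g in E | g \in pedges a1 q1], [set g in E | g \in pedges c q2], F3.
have cq : c \in a1 :: (q1 ++ q2).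
  by move: (mem_last a1 q1); rewrite lq1 !inE mem_cat => /orP[->|->]; rewrite ?orbT.
split.
- by split => //; apply/subsetP => g; rewrite inE => /andP[].
- split.
  + move: uq => /uniq_pedges; rewrite /pedges pairmap_cat lq1 cat_uniq => /and3P[_ nh _].
    move=> g; rewrite !inE => /andP[_ g1] /andP[_ g2].
    by move/negP: nh; apply; apply/hasP; exists g.
  + move=> g; rewrite inE => /andP[_ g1] /hF3[v vg vW].
    apply/negP: vW; move: (pedges_sub g1 vg); rewrite !inE mem_cat => /orP[->|->];
      by rewrite ?orbT.
  + move=> g; rewrite inE => /andP[_ g2] /hF3[v vg vW].
    apply/negP: vW; move: (pedges_sub g2 vg); rewrite negbK inE => /orP[/eqP->|vq2] //.
    by rewrite inE mem_cat vq2 !orbT.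
- split.
  + by move: (connect_F p1); rewrite lq1.
  + by rewrite eadjC l0 last_cat lq1; exact: connect_F p2.
  + exact: cF3.
Qed.
End Med.


Section Prod.
Variables (k : nat) (T : 'I_k -> finType) (e : forall i, rel (T i)).
Arguments e : clear implicits.
Hypothesis sg : forall i, simple_graph (e i).

Local Notation PT := {dffun forall i : 'I_k, T i}.
Local Notation pe := (cart_prod e).

Definition dirb (f : {set PT}) (i : 'I_k) : bool :=
  [exists u in f, exists v in f, u i != v i].

Lemma dirb2 (x y : PT) i : dirb [set x; y] i = (x i != y i).
Proof.
apply/existsP/idP => [[u /andP[uf /existsP[v /andP[vf uv]]]] | xy].
  move: uf vf uv; rewrite !inE => /orP[]/eqP-> /orP[]/eqP->; rewrite ?eqxx //.
  by rewrite eq_sym.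
by exists x; rewrite set21 /=; apply/existsP; exists y; rewrite set22.
Qed.

Lemma cp_edge (x y : PT) : pe x y ->
  exists i, e i (x i) (y i) /\ forall l, (x l != y l) = (l == i).
Proof.
move=> /existsP[i /andP[exy /forallP H]]; exists i; split => // l.
case: (eqVneq l i) => [->|li].
  by apply/negP => /eqP h; rewrite h (proj2 (sg i)) in exy.
by have /implyP/(_ li) -> := H l.
Qed.

Lemma edge_set (f : {set PT}) : is_edge pe f ->
  exists x y i, [/\ f = [set x; y], e i (x i) (y i) & forall l, (x l != y l) = (l == i)].
Proof.
move=> /existsP[x /existsP[y /andP[pxy /eqP ->]]].
by have [i [exy H]] := cp_edge pxy; exists x, y, i.
Qed.

Lemma imset2 (A B : finType) (h : A -> B) (a b : A) : h @: [set a; b] = [set h a; h b].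
Proof. by rewrite imsetU1 imset_set1. Qed.

Lemma sum_dir (f : {set PT}) : is_edge pe f -> \sum_(i < k) (dirb f i : nat) = 1.
Proof.
move=> /edge_set[x [y [i [-> _ H]]]].
rewrite (bigD1 i) //= dirb2 H eqxx big1 // => l /negPf li.
by rewrite dirb2 H li.
Qed.

Lemma proj_bound (V S : {set PT}) (E : {set {set PT}}) x0 :
  is_tree pe V E -> S \subset V -> x0 \in S ->
  \sum_(i < k) steiner_dist (e i) [set v i | v : PT in S] <= #|E|.
Proof.
move=> tr sS x0S.
have [sE _ _ cV _] := and5P tr.
have -> : #|E| = \sum_(i < k) #|[set f in E | dirb f i]|.
  rewrite -sum1_card.
  transitivity (\sum_(f in E) \sum_(i < k) (dirb f i : nat)).
    apply: eq_bigr => f fE; rewrite sum_dir //.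
    by have := subsetP sE f fE; rewrite inE.
  rewrite exchange_big /=; apply: eq_bigr => i _.
  rewrite -sum1_card big_mkcond /= [RHS]big_mkcond /=.
  by apply: eq_bigr => f _; rewrite inE; case: (f \in E); case: (dirb f i).
apply: leq_sum => i _.
set Ed := [set f in E | dirb f i].
set Pi := [set [set v i | v : PT in f] | f : {set PT} in Ed].
have sPi : Pi \subset [set g | is_edge (e i) g].
  apply/subsetP => g /imsetP[f fEd ->]; move: fEd => /setIdP[fE di].
  have : is_edge pe f by move: (subsetP sE f fE); rewrite inE.
  move=> /edge_set[x [y [j [fxy exy H]]]].
  move: di; rewrite fxy dirb2 H => /eqP ij; subst j.
  rewrite inE imset2; apply/existsP; exists (x i); apply/existsP; exists (y i).
  by rewrite exy eqxx.
have [E' sE' tr'] := comp_tree (x0 i) sPi.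
apply: leq_trans (steiner_le tr' _) _.
  apply/subsetP => z /imsetP[s sS' ->]; rewrite inE.
  have cs : connect (eadj E) x0 s.
    by have /forall_inP/(_ _ (subsetP sS _ x0S))/forall_inP/(_ _ (subsetP sS _ sS')) := cV.
  apply: (@connect_hom _ _ _ (fun v : PT => v i)) cs => a b /andP[ab abE].
  case: (eqVneq (a i) (b i)) => [-> //|abi].
  apply: connect1; rewrite /eadj abi /=.
  apply/imsetP; exists [set a; b]; last by rewrite imset2.
  by rewrite inE abE dirb2 abi.
apply: leq_trans (subset_leq_card sE') _; exact: leq_imset_card.
Qed.


Lemma enum3 (U : finType) (S : {set U}) : #|S| = 3 ->
  exists w : 'I_3 -> U, forall x, x \in S -> exists j, x = w j.
Proof.
move=> S3; have /set0Pn[x0 _] : S != set0 by rewrite -card_gt0 S3.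
exists (fun j : 'I_3 => nth x0 (enum S) j) => x xS.
have hx : index x (enum S) < 3 by rewrite -S3 cardE index_mem mem_enum.
by exists (Ordinal hx); rewrite /= nth_index ?mem_enum.
Qed.

Definition j0 : 'I_3 := @Ordinal 3 0 isT.
Definition j1 : 'I_3 := @Ordinal 3 1 isT.
Definition j2 : 'I_3 := @Ordinal 3 2 isT.

Lemma I3 (j : 'I_3) : j = j0 \/ j = j1 \/ j = j2.
Proof.
case: j => [[|[|[|n]]] h]; [left|right;left|right;right|by []]; exact: val_inj.
Qed.

Section Constr.
Variables (m : 'I_k -> nat) (cc : forall i, {ffun {set T i} -> 'I_(m i)}) (i0 : 'I_k).
Hypothesis Hcc : forall i, is_3rainbow_coloring (e i) (cc i).
Hypothesis T3 : forall i, 3 <= #|T i|.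

Definition ST := {i : 'I_k & 'I_(m i)}.

Definition col0 (f : {set PT}) : ST :=
  if [pick i | dirb f i] is Some i
  then Tagged (fun i => 'I_(m i)) (cc i [set v i | v : PT in f])
  else Tagged (fun i => 'I_(m i)) (cc i0 set0).

Definition pcol : {ffun {set PT} -> 'I_#|{: ST}|} := [ffun f => enum_rank (col0 f)].

Lemma col_edge (x y : PT) i : (forall l, (x l != y l) = (l == i)) ->
  col0 [set x; y] = Tagged (fun i => 'I_(m i)) (cc i [set x i; y i]).
Proof.
move=> H; rewrite /col0; case: pickP => [j | H0].
  by rewrite dirb2 H => /eqP ->; rewrite imset2.
by have := H0 i; rewrite dirb2 H eqxx.
Qed.

Lemma per_coord (w : 'I_3 -> PT) i :
  exists t : T i * {ffun 'I_3 -> {set {set T i}}},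
  [/\ (forall j, t.2 j \subset [set g | is_edge (e i) g]),
      rainbow (cc i) (\bigcup_j t.2 j),
      (forall j j' g, j != j' -> g \in t.2 j -> g \in t.2 j' -> False) &
      (forall j, connect (eadj (t.2 j)) (w j i) t.1)].
Proof.
set S := [set w j i | j : 'I_3 in 'I_3].
have [B [sB cB]] : exists B : {set T i}, S \subset B /\ #|B| = 3.
  apply: superset; rewrite T3 andbT.
  by apply: leq_trans (leq_imset_card _ _) _; rewrite card_ord.
have /forallP/(_ B)/implyP := Hcc i; rewrite cB => /(_ isT) /existsP[VE /and3P[tr sBV rb]].
have [sE _ _ cV _] := and5P tr.
have wV : forall j, w j i \in VE.1.
  by move=> j; apply: (subsetP sBV); apply: (subsetP sB); apply/imsetP; exists j.
have cw : forall j, connect (eadj VE.2) (w j0 i) (w j i).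
  by move=> j; have /forall_inP/(_ _ (wV j0))/forall_inP/(_ _ (wV j)) := cV.
have [c [F1 [F2 [F3 [[s1 s2 s3] [d12 d13 d23] [c1 c2 c3]]]]]] := median (cw j1) (cw j2).
exists (c, [ffun j => if j == j0 then F1 else if j == j1 then F2 else F3]); split => /=.
- move=> j; rewrite ffunE; apply: subset_trans sE.
  by case: (I3 j) => [->|[->|->]].
- apply: rainbow_sub rb; apply/bigcupsP => j _; rewrite ffunE.
  by case: (I3 j) => [->|[->|->]].
- move=> j j' g; rewrite !ffunE.
  case: (I3 j) => [->|[->|->]]; case: (I3 j') => [->|[->|->]] //= _ g1 g2;
  solve [exact: d12 g1 g2 | exact: d12 g2 g1 | exact: d13 g1 g2 | exact: d13 g2 g1
        | exact: d23 g1 g2 | exact: d23 g2 g1].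
- move=> j; rewrite ffunE.
  by case: (I3 j) => [->|[->|->]].
Qed.

Lemma construct (w : 'I_3 -> PT) :
  exists VE : {set PT} * {set {set PT}},
    [/\ is_tree pe VE.1 VE.2, forall j, w j \in VE.1 & rainbow pcol VE.2].
Proof.
have [t Ht] := fin_all_exists (per_coord w).
pose ct i := (t i).1.
pose F i := (t i).2.
have Ht1 : forall i j, F i j \subset [set g | is_edge (e i) g] by move=> i; case: (Ht i).
have Ht2 : forall i, rainbow (cc i) (\bigcup_j F i j) by move=> i; case: (Ht i).
have Ht3 : forall i j j' g, j != j' -> g \in F i j -> g \in F i j' -> False by move=> i; case: (Ht i).
have Ht4 : forall i j, connect (eadj (F i j)) (w j i) (ct i) by move=> i; case: (Ht i).
pose B (j : 'I_3) (n : nat) : PT :=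
  finfun (fun l : 'I_k => if val l < n then ct l else w j l).
pose lift (j : 'I_3) (i : 'I_k) (v : T i) : PT := finfun (dfwith (fun l => B j i l) v).
have BE : forall j n l, B j n l = if val l < n then ct l else w j l.
  by move=> j n l; rewrite ffunE.
have liftE1 : forall j i v, lift j i v i = v.
  by move=> j i v; rewrite ffunE dfwith_in.
have liftE2 : forall j i v l, l != i -> lift j i v l = B j i l.
  by move=> j i v l li; rewrite ffunE dfwith_out // eq_sym.
have lift_w : forall j i, lift j i (w j i) = B j i.
  move=> j i; apply/ffunP => l; case: (eqVneq l i) => [->|li].
    by rewrite liftE1 BE ltnn.
  by rewrite liftE2.
have lift_c : forall j (i : 'I_k), lift j i (ct i) = B j i.+1.
  move=> j i; apply/ffunP => l; case: (eqVneq l i) => [->|li].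
    by rewrite liftE1 BE ltnSn.
  rewrite liftE2 // !BE ltnS (leq_eqVlt (val l)).
  have -> : (val l == val i) = false by apply/negP => /eqP/val_inj/eqP; rewrite (negPf li).
  by [].
have dir_lift : forall j i a b, a != b -> forall l, (lift j i a l != lift j i b l) = (l == i).
  move=> j i a b ab l; case: (eqVneq l i) => [->|li].
    by rewrite !liftE1.
  by rewrite !liftE2 // eqxx.
pose H := \bigcup_(j : 'I_3) \bigcup_(i : 'I_k) [set lift j i @: g | g : {set T i} in F i j].
have inH : forall j i g, g \in F i j -> lift j i @: g \in H.
  move=> j i g gF; apply/bigcupP; exists j => //; apply/bigcupP; exists i => //.
  by apply/imsetP; exists g.
have invH : forall f, f \in H -> exists j i (a b : T i),
    [/\ [set a; b] \in F i j, e i a b & f = [set lift j i a; lift j i b]].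
  move=> f /bigcupP[j _ /bigcupP[i _ /imsetP[g gF ->]]].
  have := subsetP (Ht1 i j) g gF; rewrite inE.
  move=> /existsP[a /existsP[b /andP[eab /eqP gab]]].
  by exists j, i, a, b; rewrite -imset2 -gab.
have abne : forall i (a b : T i), e i a b -> a != b.
  by move=> i a b eab; apply/negP => /eqP h; rewrite h (proj2 (sg i)) in eab.
have edgeH : H \subset [set f | is_edge pe f].
  apply/subsetP => f /invH[j [i [a [b [_ eab ->]]]]]; rewrite inE.
  apply/existsP; exists (lift j i a); apply/existsP; exists (lift j i b).
  rewrite eqxx andbT; apply/existsP; exists i; rewrite !liftE1 eab /=.
  by apply/forallP => l; apply/implyP => li; rewrite !liftE2.
have rbH : rainbow pcol H.
  apply/forall_inP => f /invH[j [i [a [b [abF eab ->]]]]].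
  apply/forall_inP => f' /invH[j' [i' [a' [b' [abF' eab' ->]]]]].
  rewrite !ffunE; apply/implyP => /eqP/enum_rank_inj.
  rewrite (col_edge (dir_lift j i a b (abne _ _ _ eab))).
  rewrite (col_edge (dir_lift j' i' a' b' (abne _ _ _ eab'))) !liftE1 => eT.
  have ii : i' = i by have := congr1 tag eT.
  subst i'; have /eqP := eq_from_Tagged eT.
  have /forall_inP := Ht2 i => /(_ [set a; b]) Hr.
  have u1 : [set a; b] \in \bigcup_j F i j by apply/bigcupP; exists j.
  have u2 : [set a'; b'] \in \bigcup_j F i j by apply/bigcupP; exists j'.
  have /forall_inP/(_ _ u2)/implyP := Hr u1 => Hr2 /Hr2 /eqP gg.
  case: (eqVneq j j') => [jj|jj].
    by subst j'; rewrite -!imset2 gg.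
  by case: (Ht3 i j j' _ jj abF); rewrite gg.
pose c : PT := finfun ct.
have conn : forall j, connect (eadj H) (w j) c.
  move=> j.
  have B0 : B j 0 = w j by apply/ffunP => l; rewrite BE.
  have Bk : B j k = c by apply/ffunP => l; rewrite BE ltn_ord ffunE.
  suff : forall n, n <= k -> connect (eadj H) (B j 0) (B j n) by move/(_ k (leqnn k)); rewrite B0 Bk.
  elim => [//|n IH] nk.
  apply: connect_trans (IH (ltnW nk)) _.
  pose i := Ordinal nk.
  have -> : B j n = lift j i (w j i) by rewrite lift_w.
  have -> : B j n.+1 = lift j i (ct i) by rewrite lift_c.
  apply: (@connect_hom _ _ _ (lift j i)) (Ht4 i j) => a b /andP[ab abF].
  apply: connect1; rewrite /eadj -imset2 (inH _ _ _ abF) andbT.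
  by apply/negP => /eqP/(congr1 (fun v : PT => v i)); rewrite !liftE1; apply/eqP.
have [E' sE' tr] := comp_tree (w j0) edgeH.
exists ([set y | connect (eadj H) (w j0) y], E'); split => //=.
  by move=> j; rewrite inE; apply: connect_trans (conn j0) _; rewrite eadjC.
exact: rainbow_sub rbH.
Qed.

Lemma has_pcol : has_3rainbow_coloring pe #|{: ST}|.
Proof.
apply/existsP; exists pcol; apply/forallP => S; apply/implyP => /eqP /enum3[w Hw].
have [VE [tr wV rb]] := construct w.
apply/existsP; exists VE; rewrite tr rb andbT /=.
by apply/subsetP => x /Hw[j ->].
Qed.

Lemma has_N_prod : has_3rainbow_coloring pe #|{set PT}|.
Proof.
apply: inj_col => S /eqP /enum3[w Hw].
have [VE [tr wV rb]] := construct w.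
exists VE; rewrite tr /=.
by apply/subsetP => x /Hw[j ->].
Qed.

Lemma card_ST : #|{: ST}| = \sum_(i < k) m i.
Proof.
rewrite card_tagged sumnE big_map big_enum /=.
by apply: eq_bigr => i _; rewrite card_ord.
Qed.

End Constr.
End Prod.


Lemma enum3' (U : finType) (S : {set U}) : #|S| = 3 ->
  exists w : 'I_3 -> U, injective w /\ S = [set w j | j in 'I_3].
Proof.
move=> S3; have [w Hw] := enum3 S3.
have sub : S \subset [set w j | j in 'I_3].
  by apply/subsetP => x /Hw[j ->]; apply/imsetP; exists j.
have eqS : S = [set w j | j in 'I_3].
  apply/eqP; rewrite eqEcard sub /= S3.
  by apply: leq_trans (leq_imset_card _ _) _; rewrite card_ord.
exists w; split => //.
have : #|[set w j | j in 'I_3]| == #|'I_3| by rewrite -eqS S3 card_ord.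
by move/imset_injP => inj; apply: in2T.
Qed.

Unset Implicit Arguments.

Theorem theorem6 (k : nat) (T : 'I_k -> finType) (e : forall i, rel (T i)) :
  2 <= k ->
  (forall i, simple_graph (e i)) ->
  (forall i, connected_graph (e i)) ->
  (forall i, 3 <= #|T i|) ->
  rx3 (cart_prod e) <= \sum_(i < k) rx3 (e i) /\
  ((forall i, rx3 (e i) = sdiam3 (e i)) ->
     rx3 (cart_prod e) = \sum_(i < k) rx3 (e i)).
Proof.
move=> k2 sg cg T3.
pose i0 : 'I_k := Ordinal (ltnW k2).
have Hc : forall i, exists c : {ffun {set T i} -> 'I_(rx3 (e i))},
    is_3rainbow_coloring (e i) c.
  by move=> i; apply/existsP; apply: rx3_spec; apply: has_N.
have [cc Hcc] := fin_all_exists Hc.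
have part1 : rx3 (cart_prod e) <= \sum_(i < k) rx3 (e i).
  apply: leq_trans (rx3_le (has_pcol sg i0 Hcc T3)) _.
  by rewrite card_ST.
split => // Hsd.
apply/eqP; rewrite eqn_leq part1 /=.
have hA : forall i, exists tA : 'I_3 -> T i,
    injective tA /\ sdiam3 (e i) = steiner_dist (e i) [set tA j | j in 'I_3].
  move=> i.
  have [B [_ cB]] : exists B : {set T i}, set0 \subset B /\ #|B| = 3.
    by apply: superset; rewrite cards0 T3.
  have P0 : #|B| == 3 by rewrite cB.
  rewrite /sdiam3 (@bigmax_eq_arg _ B (fun S : {set T i} => #|S| == 3)) //.
  case: (@arg_maxnP _ B (fun S : {set T i} => #|S| == 3) (steiner_dist (e i)) P0) => A /eqP A3 _.
  have [w [wi ->]] := enum3' A3.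
  by exists w.
have [tA HtA] := fin_all_exists hA.
pose W (j : 'I_3) : {dffun forall i : 'I_k, T i} := finfun (fun i => tA i j).
pose S := [set W j | j in 'I_3].
have S3 : #|S| == 3.
  rewrite card_in_imset ?card_ord // => j j' _ _ eq.
  have := congr1 (fun v : {dffun forall i : 'I_k, T i} => v i0) eq.
  by rewrite /= !ffunE; apply: (proj1 (HtA i0)).
have /existsP[c Hc3] := rx3_spec (has_N_prod sg i0 Hcc T3).
have /forallP/(_ S)/implyP/(_ S3)/existsP[VE /and3P[tr sV rb]] := Hc3.
apply: leq_trans (rainbow_card rb).
have W0 : W j0 \in S by apply/imsetP; exists j0.
apply: leq_trans (proj_bound sg tr sV W0).
rewrite leq_eqVlt; apply/orP; left; apply/eqP.
apply: eq_bigr => i _.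
rewrite Hsd (proj2 (HtA i)); congr steiner_dist.
rewrite -imset_comp; apply: eq_imset => j /=; by rewrite ffunE.
Qed.
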